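(* Let $(X,\oplus,\lceil,0)$ be a finite MV-algebra. Then for all $x,y\in X$ the Fibonacci sequence attached to $x,y$, namely $u_0=x$, $u_1=y$, $u_{n+2}=u_n\oplus u_{n+1}$ ($n\in\mathbb{N}$), is stationary: there exists $k\in\mathbb{N}$ such that $u_n=u_k$ for all $n\geq k$.
   Context: An MV-algebra $(X,\oplus,\lceil,0)$ is an abelian monoid $(X,\oplus,0)$ with a unary operation $\lceil$ such that for all $x,y\in X$: $x\oplus\lceil 0=\lceil 0$; $\lceil(\lceil x)=x$; $\lceil(\lceil x\oplus y)\oplus y=\lceil(\lceil y\oplus x)\oplus x$. *)

(* Defs.v *)
From mathcomp Require Import all_boot.
Set Implicit Arguments. Unset Strict Implicit. Unset Printing Implicit Defensive.

Definition is_MV_algebra (X : Type) (oplus : X -> X -> X) (neg : X -> X) (zero : X) : Prop :=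
  (forall x y z, oplus x (oplus y z) = oplus (oplus x y) z) /\
  (forall x y, oplus x y = oplus y x) /\
  (forall x, oplus x zero = x) /\
  (forall x, oplus x (neg zero) = neg zero) /\
  (forall x, neg (neg x) = x) /\
  (forall x y, oplus (neg (oplus (neg x) y)) y = oplus (neg (oplus (neg y) x)) x).

Fixpoint fib_pair (X : Type) (oplus : X -> X -> X) (x y : X) (n : nat) : X * X :=
  match n with
  | 0 => (x, y)
  | n'.+1 => let p := fib_pair oplus x y n' in (p.2, oplus p.1 p.2)
  end.

Definition fib_seq (X : Type) (oplus : X -> X -> X) (x y : X) (n : nat) : X :=
  (fib_pair oplus x y n).1.

(* Main.v *)
Require Import Defs.
From Stdlib Require Import Classical.
From mathcomp Require Import all_boot.

Lemma nat_mono_from (f : nat -> nat) : (forall n, f n.+1 <= f n) ->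
  forall k n, k <= n -> f n <= f k.
Proof.
move=> H k n kn; elim: n kn => [|n IH]; first by rewrite leqn0 => /eqP ->.
rewrite leq_eqVlt => /orP [/eqP <- //|]; rewrite ltnS => /IH.
exact: leq_trans (H n).
Qed.

Lemma nat_stab : forall m (f : nat -> nat), (forall n, f n.+1 <= f n) -> f 0 < m ->
  exists k, forall n, k <= n -> f n = f k.
Proof.
elim=> [//|m IH] f H Hm.
case: (classic (exists j, f j < f 0)) => [[j Hj]|Hn].
  have [k Hk] := IH (fun n => f (j + n)) (fun n => ltac:(rewrite /= addnS; exact: H))
     ltac:(rewrite /= addn0; exact: leq_trans Hj Hm).
  exists (j + k) => n Hn.
  have -> : n = j + (n - j) by rewrite subnKC // (leq_trans (leq_addr k j)).
  apply: Hk; by rewrite leq_subRL ?(leq_trans (leq_addr k j)).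
exists 0 => n _; apply/eqP; rewrite eqn_leq (@nat_mono_from f H) //.
by rewrite leqNgt; apply/negP => Hlt; apply: Hn; exists n.
Qed.

Lemma fib_SS (X : Type) (oplus : X -> X -> X) x y n :
  fib_seq oplus x y n.+2 = oplus (fib_seq oplus x y n) (fib_seq oplus x y n.+1).
Proof. by []. Qed.

Theorem proposition2p6 (X : finType) (oplus : X -> X -> X) (neg : X -> X) (zero : X) :
  is_MV_algebra oplus neg zero ->
  forall x y : X, exists k : nat, forall n : nat, k <= n ->
    fib_seq oplus x y n = fib_seq oplus x y k.
Proof.
move=> [A [C [Z [O [N M]]]]] x y.
pose le a b := [exists c, b == oplus a c].
have leP a b : reflect (exists c, b = oplus a c) (le a b).
  by apply: (iffP existsP) => [[c /eqP]|[c ->]]; exists c.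
have le_refl a : le a a by apply/leP; exists zero; rewrite Z.
have le_trans a b c : le a b -> le b c -> le a c.
  move=> /leP [d ->] /leP [e ->]; apply/leP; exists (oplus d e); by rewrite A.
have neg1 : neg (neg zero) = zero by rewrite N.
have one_l a : oplus (neg zero) a = neg zero by rewrite C O.
have zero_l a : oplus zero a = a by rewrite C Z.
have compl a : oplus (neg a) a = neg zero.
  have := M a (neg zero); by rewrite !O neg1 zero_l => <-.
have leone a b : le a b -> oplus (neg a) b = neg zero.
    by move=> /leP [c ->]; rewrite A compl one_l.
have antisym a b : le a b -> le b a -> a = b.
  move=> /leone h1 /leone h2.
  have := M a b; by rewrite h1 h2 neg1 !zero_l.
pose v n := fib_seq oplus x y n.+1.
have vle n : le (v n) (v n.+1).
  by apply/leP; exists (fib_seq oplus x y n); rewrite /v fib_SS C.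
pose S n := [set z | le (v n) z].
have Ssub n : S n.+1 \subset S n.
  by apply/subsetP => z; rewrite !inE; apply: le_trans.
pose f n := #|S n|.
have fmono n : f n.+1 <= f n by exact: subset_leq_card.
have [k Hk] := @nat_stab _ f fmono (ltnSn (f 0)).
have step n : k <= n -> v n.+1 = v n.
  move=> kn.
  have Hc : #|S n.+1| == #|S n| by rewrite /f in Hk; rewrite Hk ?Hk // (leq_trans kn).
  have Eq : S n.+1 = S n.
    by apply/eqP; rewrite eqEcard Ssub (eqP Hc) leqnn.
  have : v n \in S n.+1 by rewrite Eq inE.
  rewrite inE => h; apply: antisym => //; exact: vle.
exists k.+1 => n; case: n => [//|n]; rewrite ltnS => kn.
elim: n kn => [|n IH]; first by rewrite leqn0 => /eqP ->.
rewrite leq_eqVlt => /orP [/eqP <- //|]; rewrite ltnS => kn.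
by rewrite -(IH kn); exact: (step n kn).
Qed.
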